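(* Let $r \in \mathbb{Z}_{\geqslant 2}$. For any real number $x \geqslant 1$, $$\sum_{n_1 \leqslant x, \dotsc, n_r \leqslant x} \left( \mu \left( n_1 \right) + \dotsb + \mu \left( n_r \right) \right) \left \lfloor \frac{x}{n_1 \dotsb n_r} \right \rfloor = r \sum_{n \leqslant x} \tau_{r-1}(n),$$ where the sum on the left runs over all $r$-tuples of positive integers $n_1,\dots,n_r \leqslant x$.
   Context: $\mu$ is the Möbius function, $\lfloor \cdot \rfloor$ the integer part, and $\tau_k(n)$ is the number of ways of writing $n$ as an ordered product of $k$ positive integers (so $\tau_1 \equiv 1$, $\tau_2 = \tau$ is the divisor function). *)

(* Defs.v *)
From HB Require Import structures.
From mathcomp Require Import all_boot all_order all_algebra.
From mathcomp Require Import reals.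
Set Implicit Arguments. Unset Strict Implicit. Unset Printing Implicit Defensive.
Import Order.TTheory GRing.Theory Num.Theory.
Local Open Scope ring_scope.

(* Moebius function on positive integers (mu 0 := 0, irrelevant). *)
Definition mobius (n : nat) : int :=
  if n == 0%N then 0
  else if all (fun p => logn p n <= 1)%N (primes n) then (-1) ^+ size (primes n)
  else 0.

(* tau_k n = number of ordered k-tuples (d_1,...,d_k) of positive integers
   with d_1 * ... * d_k = n  (for n >= 1; each d_i then lies in [1, n]). *)
Definition tau (k n : nat) : nat :=
  #|[set t : {ffun 'I_k -> 'I_n.+1} | [forall i, 0 < (t i : nat)]%N
        && ((\prod_(i < k) (t i : nat))%N == n)]|.

(* Main.v *)
Require Import Defs.
From HB Require Import structures.
From mathcomp Require Import all_boot all_order all_algebra.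
From mathcomp Require Import reals.
Import Order.TTheory GRing.Theory Num.Theory.
Local Open Scope ring_scope.

Lemma mob0 : mobius 0 = 0. Proof. by []. Qed.

Lemma mob_sq (p d : nat) : prime p -> (0 < d)%N -> (p ^ 2 %| d)%N -> mobius d = 0.
Proof.
move=> pp d0 hd; rewrite /mobius eqn0Ngt d0 /=.
have pd : p \in primes d.
  by rewrite mem_primes pp d0 /= (dvdn_trans _ hd) // dvdn_exp.
have : (2 <= logn p d)%N by rewrite -pfactor_dvdn.
case: allP => // /(_ p pd); case: (logn p d) => [|[|n]] //.
Qed.

Lemma mob_p (p d : nat) : prime p -> (0 < d)%N -> ~~ (p %| d)%N ->
  mobius (p * d) = - mobius d.
Proof.
move=> pp d0 npd.
have p0 := prime_gt0 pp.
have pnd : p \notin primes d by rewrite mem_primes pp d0 /= npd.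
have hperm : perm_eq (primes (p * d)) (p :: primes d).
  apply: uniq_perm; first exact: primes_uniq.
    by rewrite /= pnd primes_uniq.
  move=> q; rewrite primesM // primes_prime // mem_seq1 in_cons.
  by [].

have e1 : (p * d == 0)%N = false by rewrite eqn0Ngt muln_gt0 p0 d0.
have e2 : (d == 0)%N = false by rewrite eqn0Ngt d0.
rewrite /mobius e1 e2 (perm_size hperm) (perm_all _ hperm) /=.
rewrite lognM // logn_prime // eqxx (logn_coprime _) ?prime_coprime //.
have -> : all (fun q => (logn q (p * d) <= 1)%N) (primes d) =
          all (fun q => (logn q d <= 1)%N) (primes d).
  apply: eq_in_all => q qd; rewrite lognM // logn_prime //.
  by case: eqP qd pnd => [->|] // ->.
rewrite /=; case: (all _ _); rewrite ?oppr0 // exprS mulN1r //.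
Qed.

Lemma mob_sum (q : nat) : (0 < q)%N ->
  \sum_(d <- divisors q) mobius d = (q == 1%N)%:Z.
Proof.
move=> q0; case: (ltngtP q 1) => [|q1|->]; first by rewrite ltnNge q0.
  2: by rewrite big_cons big_nil.
have pp := pdiv_prime q1; set p := pdiv q in pp *.
have p0 := prime_gt0 pp.
set n := (q %/ p)%N.
have qE : q = (p * n)%N by rewrite mulnC divnK // pdiv_dvd.
have n0 : (0 < n)%N by move: q0; rewrite qE muln_gt0 => /andP[].
rewrite (bigID (fun d => p %| d)%N) /=.
have -> : \sum_(d <- divisors q | (p %| d)%N) mobius d
        = \sum_(d <- map (muln p) (divisors n)) mobius d.
  rewrite -big_filter; apply: perm_big; apply: uniq_perm.
  - exact/filter_uniq/divisors_uniq.
  - rewrite (map_inj_uniq (f := muln p)); first exact: divisors_uniq.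
    by move=> a b /eqP; rewrite eqn_pmul2l // => /eqP.
  move=> d; rewrite mem_filter -dvdn_divisors //.
  apply/andP/mapP => [[/dvdnP[d' ->] hd]|[d' hd' ->]].
    exists d'; last by rewrite mulnC.
    by rewrite -dvdn_divisors // -(dvdn_pmul2l p0) -qE mulnC.
  by rewrite dvdn_mulr // qE dvdn_pmul2l // dvdn_divisors.
have -> : \sum_(d <- divisors q | ~~ (p %| d)%N) mobius d
        = \sum_(d <- divisors n | ~~ (p %| d)%N) mobius d.
  rewrite -[LHS]big_filter -[RHS]big_filter; apply: perm_big; apply: uniq_perm.
  - exact/filter_uniq/divisors_uniq.
  - exact/filter_uniq/divisors_uniq.
  move=> d; rewrite !mem_filter -!dvdn_divisors //.
  case pd: (p %| d)%N => //=.
  have cdp : coprime d p by rewrite coprime_sym prime_coprime // pd.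
  by rewrite qE (Gauss_dvdr _ cdp).
rewrite big_map.
have -> : \sum_(d <- divisors n) mobius (p * d)
        = - \sum_(d <- divisors n | ~~ (p %| d)%N) mobius d.
  rewrite -sumrN [RHS]big_mkcond /=; apply: eq_big_seq => d.
  rewrite -dvdn_divisors // => /(dvdn_gt0 n0) d0.
  case pd: (p %| d)%N => /=.
    by rewrite (@mob_sq p) ?muln_gt0 ?p0 // expnS expn1 dvdn_pmul2l.
  by rewrite mob_p // pd.
by rewrite addNr; case: (q =P 1%N) q1 => // ->.
Qed.

Lemma mob_dvd_sum (N M k : nat) : (0 < M)%N -> (0 < k)%N -> (k <= N)%N ->
  \sum_(a < N.+1) mobius a * ((a * M %| k)%N : nat)%:Z = ((M == k) : nat)%:Z.
Proof.
move=> M0 k0 kN; case hd: (M %| k)%N; last first.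
  rewrite big1; last first.
    move=> a _; suff -> : (a * M %| k)%N = false by rewrite mulr0.
    apply/negP => h; move/negP: hd; apply; exact: dvdn_trans (dvdn_mull _ (dvdnn M)) h.
  by case: eqP hd => // ->; rewrite dvdnn.
set q := (k %/ M)%N.
have kE : k = (q * M)%N by rewrite divnK.
have q0 : (0 < q)%N by move: k0; rewrite kE muln_gt0 => /andP[].
have qN : (q <= N)%N by rewrite (leq_trans _ kN) // /q leq_div.
rewrite kE.
have -> : (M == q * M)%N = (q == 1)%N by rewrite -{1}(mul1n M) eqn_pmul2r // eq_sym.
transitivity (\sum_(a < N.+1 | (a %| q)%N) mobius a).
  rewrite [RHS]big_mkcond; apply: eq_bigr => a _.
  rewrite dvdn_pmul2r //; case: (a %| q)%N; by rewrite ?mulr1 ?mulr0.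
rewrite -(big_mkord (fun a => a %| q)%N mobius) -big_filter -mob_sum //.
apply: perm_big; apply: uniq_perm.
- exact/filter_uniq/iota_uniq.
- exact: divisors_uniq.
move=> d; rewrite mem_filter -dvdn_divisors // mem_index_iota /=.
case hdq: (d %| q)%N => //=.
by rewrite ltnS (leq_trans (dvdn_leq q0 hdq)).
Qed.

Lemma divn_sum (n m : nat) : (0 < m)%N ->
  (n %/ m)%N = (\sum_(1 <= k < n.+1) (m %| k))%N.
Proof.
move=> m0; elim: n => [|n IH]; first by rewrite div0n big_geq.
by rewrite big_nat_recr //= divnS // IH addnC.
Qed.

Lemma floor_div (R : realType) (x : R) (N m : nat) :
  N%:Z = Num.floor x -> (0 < m)%N ->
  Num.floor (x / m%:R) = (N %/ m)%N%:Z.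
Proof.
move=> hN m0; apply: floor_def.
have h1 := leq_divM N m.
have h2 := ltn_ceil N m0.
have fl := floor_le x; have fg := floorD1_gt x.
rewrite -hN in fl fg.
have mR : (0 : R) < m%:R by rewrite ltr0n.
have c1 : ((N %/ m)%N * m)%:R <= N%:R :> R by rewrite ler_nat.
have c2 : (N.+1)%:R <= ((N %/ m).+1 * m)%:R :> R by rewrite ler_nat.
move: c1 c2; rewrite !natrM -addn1 !natrD => c1 c2.
rewrite ler_pdivlMr // ltr_pdivrMr //.
have e1 : ((N %/ m)%N%:Z)%:~R = ((N %/ m)%N)%:R :> R by [].
have e2 : ((N %/ m)%N%:Z + 1)%:~R = ((N %/ m)%N)%:R + 1 :> R.
  by rewrite intrD.
have e3 : (N%:Z)%:~R = N%:R :> R by [].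
have e4 : (N%:Z + 1)%:~R = N%:R + 1 :> R by rewrite intrD.
rewrite e1 e2; rewrite e3 in fl; rewrite e4 in fg.
apply/andP; split.
  exact: le_trans c1 fl.
apply: (lt_le_trans fg); move: c2; rewrite -(addn1 (N %/ m)) natrD mulrDl mul1r; exact.
Qed.

Section Step4.
Variables (N r' k : nat) (i : 'I_r'.+1).
Hypotheses (k0 : (0 < k)%N) (kN : (k <= N)%N).
Notation FT := {ffun 'I_r'.+1 -> 'I_N.+1}.
Let N0 : (0 < N)%N. Proof. exact: leq_trans kN. Qed.
Let one : 'I_N.+1 := inord 1.
Let oneE : (one : nat) = 1%N. Proof. by rewrite inordK // ltnS. Qed.
Let upd (u : FT) (a : 'I_N.+1) : FT := [ffun j => if j == i then a else u j].
Let S (t : FT) := [forall j, 0 < (t j : nat)]%N.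
Let P (t : FT) := (\prod_(j < r'.+1) (t j : nat))%N.

Let P_upd (u : FT) (a : 'I_N.+1) : u i = one -> P (upd u a) = (a * P u)%N.
Proof.
move=> ui; rewrite /P (bigD1 i) //= [in RHS](bigD1 i) //= ui oneE mul1n ffunE eqxx.
congr (_ * _)%N; apply: eq_bigr => j /negbTE ji; by rewrite ffunE ji.
Qed.

Let S_upd (t : FT) : S (upd t one) && (0 < t i)%N = S t.
Proof.
apply/idP/idP.
  case/andP => /forallP h ti; apply/forallP => j.
  case: (eqVneq j i) => [->|ji] //; move: (h j); by rewrite ffunE (negbTE ji).
move/forallP => h; rewrite h andbT; apply/forallP => j; rewrite ffunE.
by case: ifP; rewrite ?oneE.
Qed.

Lemma step4_count :
  \sum_(u | S u && (u i == one)) ((P u == k) : nat)%:Z = (tau r' k)%:Z.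
Proof.
rewrite -(big_morph Posz PoszD (erefl 0%:Z)); congr Posz.
rewrite /tau -sum1_card.
rewrite (eq_bigr (fun u => if P u == k then 1 else 0)%N); last by move=> u _; case: (P u == k).
rewrite -big_mkcondr.
have kN' : (k.+1 <= N.+1)%N by [].
pose h' (v : {ffun 'I_r' -> 'I_k.+1}) : FT :=
  [ffun j => if unlift i j is Some j' then widen_ord kN' (v j') else one].
pose g (u : FT) : {ffun 'I_r' -> 'I_k.+1} := [ffun j' => inord (u (lift i j'))].
have h'i v : h' v i = one by rewrite ffunE unlift_none.
have h'l v j : h' v (lift i j) = widen_ord kN' (v j) by rewrite ffunE liftK.
rewrite (reindex h') /=; last first.
  exists g => [v _|u].
    apply/ffunP => j; rewrite ffunE h'l; apply: val_inj => /=.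
    by rewrite inordK // ltn_ord.
  rewrite inE => /andP[/andP[Su /eqP ui] /eqP Pu].
  have ujk j : (u j <= k)%N.
    apply: dvdn_leq => //; rewrite -Pu /P (bigD1 j) //=; exact: dvdn_mulr.
  apply/ffunP => j; rewrite ffunE; case: unliftP => [j' ->|->] //.
  rewrite ffunE; apply: val_inj => /=; rewrite inordK //; exact: ujk.
apply: eq_bigl => v; rewrite inE h'i eqxx andbT.
have -> : P (h' v) = (\prod_(j < r') (v j : nat))%N.
  rewrite /P (bigD1_ord i) //= h'i oneE mul1n; apply: eq_bigr => j _.
  by rewrite h'l.
congr (_ && _); apply/forallP/forallP => H j.
  by move: (H (lift i j)); rewrite h'l.
case: (unliftP i j) => [j' ->|->]; first by rewrite h'l; exact: H.
by rewrite h'i oneE.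
Qed.

Lemma step4 :
  \sum_(t : FT | [forall j, 0 < (t j : nat)]%N)
      mobius (t i) * ((\prod_(j < r'.+1) (t j : nat) %| k)%N : nat)%:Z
  = (tau r' k)%:Z.
Proof.
pose h (t : FT) := (upd t one, t i).
pose G (p : FT * 'I_N.+1) := mobius p.2 * ((p.2 * P p.1 %| k)%N : nat)%:Z.
transitivity (\sum_(p : FT * 'I_N.+1 | (S p.1 && (p.1 i == one)) && (0 < p.2)%N) G p).
  rewrite (reindex h) /=; last first.
    exists (fun p => upd p.1 p.2) => [t _|[u a]]; rewrite /=.
      by apply/ffunP => j; rewrite !ffunE; case: eqP => // ->.
    case/andP => /andP[_ /eqP ui] _; congr (_, _); last by rewrite ffunE eqxx.
    by apply/ffunP => j; rewrite !ffunE; case: eqP => // ->.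
  apply: eq_big => t.
    by rewrite ffunE eqxx eqxx andbT S_upd.
  move=> _; rewrite /G /= -P_upd ?ffunE ?eqxx //; congr (_ * (Posz (nat_of_bool (dvdn _ _)))).
  by congr P; apply/ffunP => j; rewrite !ffunE; case: eqP => // ->.
rewrite -(pair_big (fun u : FT => S u && (u i == one)) (fun a : 'I_N.+1 => 0 < a)%N (fun u a => G (u, a))) /= -step4_count; apply: eq_bigr => u /andP[Su /eqP ui].
have Pu0 : (0 < P u)%N by apply: prodn_gt0 => j; move/forallP: Su; apply.
rewrite -(mob_dvd_sum N (P u) k Pu0 k0 kN) [RHS](bigD1 ord0) //= mob0 mul0r add0r.
by apply: eq_big => // a; rewrite lt0n.
Qed.
End Step4.

Theorem theorem1p6 (R : realType) (r : nat) (x : R) :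
  (2 <= r)%N -> 1 <= x ->
  let N := `|Num.floor x|%N in
  \sum_(t : {ffun 'I_r -> 'I_N.+1} | [forall i, 0 < (t i : nat)]%N)
     (\sum_(i < r) mobius (t i)) *
     Num.floor (x / ((\prod_(i < r) (t i : nat))%N)%:R)
  = (r%:Z * \sum_(1 <= n < N.+1) (tau r.-1 n)%:Z).
Proof.
move=> hr hx N.
have hN : N%:Z = Num.floor x.
  by rewrite /N abszE ger0_norm // floor_ge0 (le_trans _ hx).
case: r hr => [|r'] // hr /=.
rewrite (eq_bigr (fun t : {ffun 'I_r'.+1 -> 'I_N.+1} => \sum_(i < r'.+1) \sum_(1 <= k < N.+1)
    mobius (t i) * ((\prod_(j < r'.+1) (t j : nat) %| k)%N : nat)%:Z)); last first.
  move=> t /forallP tpos.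
  rewrite (@floor_div R x N _ hN) ?prodn_gt0 // divn_sum ?prodn_gt0 //.
  rewrite (big_morph Posz PoszD (erefl 0%:Z)) mulr_suml; apply: eq_bigr => i _.
  by rewrite mulr_sumr.
rewrite exchange_big /=.
rewrite (eq_bigr (fun i => \sum_(1 <= k < N.+1) (tau r' k)%:Z)); last first.
  move=> i _; rewrite exchange_big; apply: eq_big_nat => k /andP[k1 kN].
  exact: step4.
by rewrite sumr_const card_ord -mulr_natl natz.
Qed.
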